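(* Let $K\ge 1$ and let $Y,\hat Y\in[K]=\{1,\dots,K\}$, $A\in\{0,1\}$, $D\in\{0,1\}$ be jointly distributed random variables such that $\mathbb{P}(\hat Y=Y\mid D=1)=1$, and let $p_D:=\mathbb{P}(D=1)$. Assume $p^+\in(0,1)$, and that all conditional probabilities below are well-defined (all conditioning events have positive probability; in particular $p_y^+>0$ and $p_y-p_y^+>0$). Then for all $y,\hat y\in[K]$: \[ \Delta\mathrm{s.p.}(\hat y)=\frac{p_D}{p^+(1-p^+)}\Bigl(\varphi^+_{\hat y}(p^+-q^+)-(q_{\hat y}p^+-q^+_{\hat y})\Bigr)+\Delta\mathrm{s.p.}(\hat y\mid D=0)\Bigl(1-p_D\frac{1-q^+}{1-p^+}\Bigr), \] \[ \Delta\mathrm{eq.opp.}(y)=\frac{p_D}{p_y^+(p_y-p_y^+)}\bigl(C^+_{y,y}-1\bigr)(q_yp_y^+-p_yq_y^+)+\Delta\mathrm{eq.opp.}(y\mid D=0)\Bigl(1-p_D\frac{q_y-q_y^+}{p_y-p_y^+}\Bigr), \] \[ \Delta\mathrm{eq.odds}(y,\hat y)=\frac{p_D}{p_y^+(p_y-p_y^+)}\bigl(C^+_{y,\hat y}-\mathbb{1}\{y=\hat y\}\bigr)(q_yp_y^+-p_yq_y^+)+\Delta\mathrm{eq.odds}(y,\hat y\mid D=0)\Bigl(1-p_D\frac{q_y-q_y^+}{p_y-p_y^+}\Bigr). \]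
   Context: Notation: $p^+=\mathbb{P}(A=1)$, $q^+=\mathbb{P}(A=1\mid D=1)$, $p_y=\mathbb{P}(Y=y)$, $q_y=\mathbb{P}(Y=y\mid D=1)$, $p_y^+=\mathbb{P}(Y=y,A=1)$, $q_y^+=\mathbb{P}(Y=y,A=1\mid D=1)$ (so $q^+=\sum_y q_y^+$). Base-classifier quantities: $\varphi_y^{+}=\mathbb{P}(\hat Y=y\mid D=0,A=1)$, $\varphi_y^-=\mathbb{P}(\hat Y=y\mid D=0,A=0)$, $C^+_{y,\hat y}=\mathbb{P}(\hat Y=\hat y\mid D=0,Y=y,A=1)$, $C^-_{y,\hat y}=\mathbb{P}(\hat Y=\hat y\mid D=0,Y=y,A=0)$. Fairness gaps: $\Delta\mathrm{s.p.}(\hat y)=\mathbb{P}(\hat Y=\hat y\mid A=1)-\mathbb{P}(\hat Y=\hat y\mid A=0)$; $\Delta\mathrm{s.p.}(\hat y\mid D=0)=\mathbb{P}(\hat Y=\hat y\mid A=1,D=0)-\mathbb{P}(\hat Y=\hat y\mid A=0,D=0)=\varphi^+_{\hat y}-\varphi^-_{\hat y}$; $\Delta\mathrm{eq.odds}(y,\hat y)=\mathbb{P}(\hat Y=\hat y\mid A=1,Y=y)-\mathbb{P}(\hat Y=\hat y\mid A=0,Y=y)$; $\Delta\mathrm{eq.odds}(y,\hat y\mid D=0)$ is the same with $D=0$ added to both conditionings, equal to $C^+_{y,\hat y}-C^-_{y,\hat y}$; $\Delta\mathrm{eq.opp.}(y)=\Delta\mathrm{eq.odds}(y,y)$ and $\Delta\mathrm{eq.opp.}(y\mid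 D=0)=\Delta\mathrm{eq.odds}(y,y\mid D=0)$. *)

(* Defs.v *)
From mathcomp Require Import all_boot all_order all_algebra.
Set Implicit Arguments. Unset Strict Implicit. Unset Printing Implicit Defensive.
Import Order.TTheory GRing.Theory Num.Theory.
Local Open Scope ring_scope.

Definition is_prob (R : realFieldType) (Omega : finType) (P : Omega -> R) :=
  (forall w, 0 <= P w) /\ \sum_(w : Omega) P w = 1.

Definition Pr (R : realFieldType) (Omega : finType) (P : Omega -> R)
  (E : pred Omega) : R := \sum_(w : Omega | E w) P w.

Definition cPr (R : realFieldType) (Omega : finType) (P : Omega -> R)
  (E F : pred Omega) : R := Pr P (predI E F) / Pr P F.

Section Fair.
Variables (R : realFieldType) (Omega : finType) (P : Omega -> R) (K : nat)
  (Y Yh : Omega -> 'I_K) (A D : Omega -> bool).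

Definition dsp (yh : 'I_K) : R :=
  cPr P (fun w => Yh w == yh) (fun w => A w)
  - cPr P (fun w => Yh w == yh) (fun w => ~~ A w).

Definition dsp0 (yh : 'I_K) : R :=
  cPr P (fun w => Yh w == yh) (fun w => A w && ~~ D w)
  - cPr P (fun w => Yh w == yh) (fun w => ~~ A w && ~~ D w).

Definition deqodds (y yh : 'I_K) : R :=
  cPr P (fun w => Yh w == yh) (fun w => A w && (Y w == y))
  - cPr P (fun w => Yh w == yh) (fun w => ~~ A w && (Y w == y)).

Definition deqodds0 (y yh : 'I_K) : R :=
  cPr P (fun w => Yh w == yh) (fun w => [&& A w, Y w == y & ~~ D w])
  - cPr P (fun w => Yh w == yh) (fun w => [&& ~~ A w, Y w == y & ~~ D w]).

Definition deqopp (y : 'I_K) : R := deqodds y y.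
Definition deqopp0 (y : 'I_K) : R := deqodds0 y y.

Definition pD : R := Pr P (fun w => D w).
Definition pplus : R := Pr P (fun w => A w).
Definition qplus : R := cPr P (fun w => A w) (fun w => D w).
Definition p_ (y : 'I_K) : R := Pr P (fun w => Y w == y).
Definition q_ (y : 'I_K) : R := cPr P (fun w => Y w == y) (fun w => D w).
Definition pplus_ (y : 'I_K) : R := Pr P (fun w => (Y w == y) && A w).
Definition qplus_ (y : 'I_K) : R :=
  cPr P (fun w => (Y w == y) && A w) (fun w => D w).
Definition phiplus (yh : 'I_K) : R :=
  cPr P (fun w => Yh w == yh) (fun w => ~~ D w && A w).
Definition phiminus (yh : 'I_K) : R :=
  cPr P (fun w => Yh w == yh) (fun w => ~~ D w && ~~ A w).
Definition Cplus (y yh : 'I_K) : R :=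
  cPr P (fun w => Yh w == yh) (fun w => [&& ~~ D w, Y w == y & A w]).
Definition Cminus (y yh : 'I_K) : R :=
  cPr P (fun w => Yh w == yh) (fun w => [&& ~~ D w, Y w == y & ~~ A w]).

End Fair.

(* Main.v *)
Require Import Defs.
From mathcomp Require Import all_boot all_order all_algebra.
Import Order.TTheory GRing.Theory Num.Theory.
Local Open Scope ring_scope.

From mathcomp Require Import ring.

Lemma alg_sp (R: realFieldType) (x1 x2 x3 x4 u1 u2 v1 v2 : R) :
 x3 + x4 + v1 + v2 = 1 -> v1 != 0 -> v2 != 0 -> x3 + x4 != 0 -> x3+v1 != 0 -> x4 + v2 != 0 ->
 (x1+u1)/(x3+v1) - (x2+u2)/(x4+v2) =
 (x3+x4)/((x3+v1)*(1-(x3+v1))) * (u1/v1*((x3+v1) - x3/(x3+x4)) - ((x1+x2)/(x3+x4)*(x3+v1) - x1/(x3+x4))) + (u1/v1 - u2/v2)*(1 - (x3+x4)*((1 - x3/(x3+x4))/(1-(x3+v1)))).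
Proof.
move=> h n1 n2 n3 n4 n5.
have e : 1 - (x3 + v1) = x4 + v2 by rewrite -h; ring.
have e2 : v2 = 1 - x3 - x4 - v1 by rewrite -h; ring.
rewrite e. rewrite e2 in n2 n5 *. field. by rewrite ?n1 ?n2 ?n3 ?n4 ?n5.
Qed.
Lemma alg_eo (R: realFieldType) (a b d c1 c2 e1 e2 dl : R) :
 d != 0 -> e1 != 0 -> e2 != 0 -> a + e1 != 0 -> b + e2 != 0 ->
 (dl*a+c1)/(a+e1) - (dl*b+c2)/(b+e2) =
 d/((a+e1)*((a+e1+(b+e2)) - (a+e1))) * (c1/e1 - dl) * ((a+b)/d*(a+e1) - (a+e1+(b+e2))*(a/d))
 + (c1/e1 - c2/e2)*(1 - d*(((a+b)/d - a/d)/((a+e1+(b+e2)) - (a+e1)))).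
Proof.
move=> n1 n2 n3 n4 n5.
have e : a+e1+(b+e2) - (a+e1) = b+e2 by ring.
rewrite e. field. by rewrite ?n1 ?n2 ?n3 ?n4 ?n5.
Qed.

Section PrLemmas.
Variables (R : realFieldType) (Omega : finType) (P : Omega -> R).

Lemma Pr_I (E F : pred Omega) : Pr P (predI E F) = Pr P (fun w => E w && F w).
Proof. by []. Qed.

Lemma Pr_ext (E F : pred Omega) :
  (forall w, P w != 0 -> E w = F w) -> Pr P E = Pr P F.
Proof.
move=> H; rewrite /Pr [LHS]big_mkcond [RHS]big_mkcond; apply: eq_bigr => w _.
by have [->|/H ->] := eqVneq (P w) 0; rewrite ?if_same.
Qed.

Lemma Pr_split (E F : pred Omega) :
  Pr P E = Pr P (fun w => E w && F w) + Pr P (fun w => E w && ~~ F w).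
Proof. by rewrite /Pr (bigID F). Qed.

Lemma Pr_split2 (E F G1 G2 : pred Omega) :
  (forall w, P w != 0 -> E w && F w = G1 w) ->
  (forall w, P w != 0 -> E w && ~~ F w = G2 w) ->
  Pr P E = Pr P G1 + Pr P G2.
Proof.
by move=> h1 h2; rewrite (Pr_split E F); congr (_ + _); apply: Pr_ext.
Qed.

Lemma Pr_false : Pr P (fun _ => false) = 0.
Proof. by rewrite /Pr big_pred0. Qed.

End PrLemmas.
Ltac ext_tac HD D A := let w := fresh "w" in let Pw := fresh "Pw" in
  let Hw := fresh "Hw" in
  move=> w Pw; move: (HD w Pw); case: (D w) => [/(_ isT) Hw|_]; try rewrite Hw;
  case: (A w); rewrite /= ?andbT ?andbF //.

Theorem theorem8 (R : realFieldType) (Omega : finType) (P : Omega -> R)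
  (K : nat) (Y Yh : Omega -> 'I_K) (A D : Omega -> bool) :
  (1 <= K)%N ->
  is_prob P ->
  cPr P (fun w => Yh w == Y w) (fun w => D w) = 1 ->
  0 < pplus P A -> pplus P A < 1 ->
  (* all conditioning events have positive probability *)
  0 < Pr P (fun w => D w) ->
  0 < Pr P (fun w => ~~ D w && A w) ->
  0 < Pr P (fun w => ~~ D w && ~~ A w) ->
  (forall y, 0 < Pr P (fun w => (Y w == y) && A w)) ->
  (forall y, 0 < Pr P (fun w => (Y w == y) && ~~ A w)) ->
  (forall y, 0 < Pr P (fun w => [&& ~~ D w, Y w == y & A w])) ->
  (forall y, 0 < Pr P (fun w => [&& ~~ D w, Y w == y & ~~ A w])) ->
  forall y yh : 'I_K,
    let pD := pD P D in
    let pp := pplus P A in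
    let qp := qplus P A D in
    [/\ dsp P Yh A yh =
          pD / (pp * (1 - pp)) *
            (phiplus P Yh A D yh * (pp - qp) - (q_ P Y D yh * pp - qplus_ P Y A D yh))
          + dsp0 P Yh A D yh * (1 - pD * ((1 - qp) / (1 - pp))),
        deqopp P Y Yh A y =
          pD / (pplus_ P Y A y * (p_ P Y y - pplus_ P Y A y)) *
            (Cplus P Y Yh A D y y - 1) *
            (q_ P Y D y * pplus_ P Y A y - p_ P Y y * qplus_ P Y A D y)
          + deqopp0 P Y Yh A D y *
            (1 - pD * ((q_ P Y D y - qplus_ P Y A D y) / (p_ P Y y - pplus_ P Y A y)))
      & deqodds P Y Yh A y yh =
          pD / (pplus_ P Y A y * (p_ P Y y - pplus_ P Y A y)) *
            (Cplus P Y Yh A D y yh - (y == yh)%:R) *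
            (q_ P Y D y * pplus_ P Y A y - p_ P Y y * qplus_ P Y A D y)
          + deqodds0 P Y Yh A D y yh *
            (1 - pD * ((q_ P Y D y - qplus_ P Y A D y) / (p_ P Y y - pplus_ P Y A y)))].


Proof.
move=> K1 [P0 P1] HYD pp0 pp1 d0 v10 v20 hyA hynA e10 e20 y yh pD0 pp qp.
rewrite /pD0 /pp /qp.
have HD : forall w, P w != 0 -> D w -> Yh w = Y w.
  have H1 : Pr P (fun w => D w && (Yh w != Y w)) = 0.
    have h : Pr P (fun w => (Yh w == Y w) && D w) = Pr P (fun w => D w).
      move: HYD; rewrite /cPr Pr_I => /(congr1 (fun t => t * Pr P (fun w => D w))).
      by rewrite mulfVK ?mul1r // gt_eqF.
    have := @Pr_split _ _ P (fun w => D w) (fun w => Yh w == Y w).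
    rewrite [X in _ = X + _](_ : _ = Pr P (fun w => (Yh w == Y w) && D w)).
      by rewrite h => e; apply: (addrI (Pr P (fun w => D w))); rewrite addr0 -e.
    by apply: Pr_ext => w _; rewrite andbC.
  move=> w Pw Dw; case: (eqVneq (Yh w) (Y w)) => // Hn; exfalso; move/eqP: Pw; apply.
  apply: (psumr_eq0P (P := fun w => D w && (Yh w != Y w)) _ H1).
    by move=> i _; apply: P0.
  by rewrite Dw Hn.
have Sp : dsp P Yh A yh =
   pD P D / (pplus P A * (1 - pplus P A)) *
   (phiplus P Yh A D yh * (pplus P A - qplus P A D) -
    (q_ P Y D yh * pplus P A - qplus_ P Y A D yh))
   + dsp0 P Yh A D yh * (1 - pD P D * ((1 - qplus P A D) / (1 - pplus P A))).
  set x1 := Pr P (fun w => [&& Y w == yh, A w & D w]).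
  set x2 := Pr P (fun w => [&& Y w == yh, ~~ A w & D w]).
  set x3 := Pr P (fun w => A w && D w).
  set x4 := Pr P (fun w => ~~ A w && D w).
  set u1 := Pr P (fun w => (Yh w == yh) && (~~ D w && A w)).
  set u2 := Pr P (fun w => (Yh w == yh) && (~~ D w && ~~ A w)).
  set v1 := Pr P (fun w => ~~ D w && A w).
  set v2 := Pr P (fun w => ~~ D w && ~~ A w).
  have EA : Pr P (fun w => A w) = x3 + v1.
    by apply: (@Pr_split2 _ _ P _ (fun w => D w)); ext_tac HD D A.
  have EnA : Pr P (fun w => ~~ A w) = x4 + v2.
    by apply: (@Pr_split2 _ _ P _ (fun w => D w)); ext_tac HD D A.
  have Ed : Pr P (fun w => D w) = x3 + x4.
    by apply: (@Pr_split2 _ _ P _ (fun w => A w)); ext_tac HD D A.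
  have Etot : x3 + x4 + v1 + v2 = 1.
    rewrite -P1 -addrA -Ed.
    have -> : v1 + v2 = Pr P (fun w => ~~ D w).
      by symmetry; apply: (@Pr_split2 _ _ P _ (fun w => A w)); ext_tac HD D A.
    by symmetry; exact: (@Pr_split _ _ P (fun _ => true) (fun w => D w)).
  have Edsp : dsp P Yh A yh = (x1+u1)/(x3+v1) - (x2+u2)/(x4+v2).
    rewrite /dsp /cPr !Pr_I EA EnA; congr (_ / _ - _ / _).
      by apply: (@Pr_split2 _ _ P _ (fun w => D w)); ext_tac HD D A.
    by apply: (@Pr_split2 _ _ P _ (fun w => D w)); ext_tac HD D A.
  have Edsp0 : dsp0 P Yh A D yh = u1/v1 - u2/v2.
    rewrite /dsp0 /cPr !Pr_I; congr (_ / _ - _ / _); apply: Pr_ext; ext_tac HD D A.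
  have Ephi : phiplus P Yh A D yh = u1 / v1 by [].
  have Eq : q_ P Y D yh = (x1 + x2) / (x3 + x4).
    rewrite /q_ /cPr Pr_I -Ed; congr (_ / _).
    by apply: (@Pr_split2 _ _ P _ (fun w => A w)); ext_tac HD D A.
  have Eqp : qplus_ P Y A D yh = x1 / (x3 + x4).
    rewrite /qplus_ /cPr Pr_I -Ed; congr (_ / _).
    by apply: Pr_ext; ext_tac HD D A.
  have Eqpl : qplus P A D = x3 / (x3 + x4) by rewrite /qplus /cPr Pr_I -Ed.
  rewrite Edsp Edsp0 Ephi Eq Eqp Eqpl /pD /pplus Ed EA.
  have pppos : 0 < x3 + v1 by rewrite -EA.
  have pplt : x3 + v1 < 1 by rewrite -EA.
  apply: alg_sp => //; try by rewrite gt_eqF.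
  - by rewrite -Ed gt_eqF.
  - have -> : x4 + v2 = 1 - (x3 + v1) by rewrite -Etot; ring.
    by rewrite subr_eq0 eq_sym lt_eqF.
have Eo : forall yh : 'I_K, deqodds P Y Yh A y yh =
   pD P D / (pplus_ P Y A y * (p_ P Y y - pplus_ P Y A y)) *
   (Cplus P Y Yh A D y yh - (y == yh)%:R) *
   (q_ P Y D y * pplus_ P Y A y - p_ P Y y * qplus_ P Y A D y)
   + deqodds0 P Y Yh A D y yh *
   (1 - pD P D * ((q_ P Y D y - qplus_ P Y A D y) / (p_ P Y y - pplus_ P Y A y))).
  move=> z.
  set a := Pr P (fun w => [&& Y w == y, A w & D w]).
  set b := Pr P (fun w => [&& Y w == y, ~~ A w & D w]).
  set d := Pr P (fun w => D w).
  set e1 := Pr P (fun w => [&& ~~ D w, Y w == y & A w]).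
  set e2 := Pr P (fun w => [&& ~~ D w, Y w == y & ~~ A w]).
  set c1 := Pr P (fun w => (Yh w == z) && [&& ~~ D w, Y w == y & A w]).
  set c2 := Pr P (fun w => (Yh w == z) && [&& ~~ D w, Y w == y & ~~ A w]).
  set dl : R := (y == z)%:R.
  have Edl : forall B : pred Omega, Pr P (fun w => (Yh w == z) && (B w && (Y w == y)) && D w)
                   = dl * Pr P (fun w => [&& Y w == y, B w & D w]).
    move=> B; rewrite /dl; case: eqVneq => [<-|neq]; rewrite ?mul1r ?mul0r.
      by apply: Pr_ext => w Pw; move: (HD w Pw); case: (D w) => [/(_ isT) ->|_];
         case: (B w); case: (Y w == y); rewrite /= ?andbT ?andbF.
    rewrite -(@Pr_false _ _ P); apply: Pr_ext => w Pw; move: (HD w Pw).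
    case: (D w) => [/(_ isT) ->|_]; rewrite ?andbF //.
    by case: (Y w =P y) => [->|]; rewrite ?(negbTE neq) ?andbF.
  have EyA : Pr P (fun w => (Y w == y) && A w) = a + e1.
    by apply: (@Pr_split2 _ _ P _ (fun w => D w)); ext_tac HD D A.
  have EynA : Pr P (fun w => (Y w == y) && ~~ A w) = b + e2.
    by apply: (@Pr_split2 _ _ P _ (fun w => D w)); ext_tac HD D A.
  have Ep : p_ P Y y = a + e1 + (b + e2).
    by rewrite /p_ -EyA -EynA -Pr_split.
  have Epp : pplus_ P Y A y = a + e1 by [].
  have Eeo : deqodds P Y Yh A y z = (dl*a+c1)/(a+e1) - (dl*b+c2)/(b+e2).
    rewrite /deqodds /cPr !Pr_I; congr (_ / _ - _ / _).
    - rewrite (@Pr_split _ _ P _ (fun w => D w)) Edl; congr (_ + _).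
      by apply: Pr_ext; ext_tac HD D A.
    - by rewrite -EyA; apply: Pr_ext; ext_tac HD D A.
    - rewrite (@Pr_split _ _ P _ (fun w => D w)) Edl; congr (_ + _).
      by apply: Pr_ext; ext_tac HD D A.
    - by rewrite -EynA; apply: Pr_ext; ext_tac HD D A.
  have Eeo0 : deqodds0 P Y Yh A D y z = c1/e1 - c2/e2.
    rewrite /deqodds0 /cPr !Pr_I; congr (_ / _ - _ / _); apply: Pr_ext; ext_tac HD D A.
  have EC : Cplus P Y Yh A D y z = c1 / e1 by [].
  have Eq : q_ P Y D y = (a + b) / d.
    rewrite /q_ /cPr Pr_I; congr (_ / _).
    by apply: (@Pr_split2 _ _ P _ (fun w => A w)); ext_tac HD D A.
  have Eqp : qplus_ P Y A D y = a / d.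
    rewrite /qplus_ /cPr Pr_I; congr (_ / _).
    by apply: Pr_ext; ext_tac HD D A.
  rewrite Eeo Eeo0 EC Eq Eqp Ep Epp /pD -/d.
  apply: alg_eo; apply: lt0r_neq0.
  - exact: d0.
  - exact: e10.
  - exact: e20.
  - by rewrite -EyA.
  - by rewrite -EynA.
split; [exact: Sp | by rewrite /deqopp /deqopp0 Eo eqxx | exact: Eo].
Qed.
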